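(* Let $(h_n)_{n\ge 0}$ be a sequence of positive real numbers (not depending on $a$) and, for $a>0$, let \[ h(a,x)=\sum_{n=0}^{\infty}\frac{h_n}{(a)_n}x^n \] (a formal power series in $x$). Let $b>a>0$ and $\delta>0$, and write \[ \lambda_{a,b,\delta}(x)=h(a+\delta,x)h(b,x)-h(b+\delta,x)h(a,x)=\sum_{m=0}^{\infty}\lambda_m x^m . \] Then $\lambda_0=0$ and $\lambda_m<0$ for all $m\ge 1$, so that $a\mapsto h(a,x)$ is strictly log-convex for $x>0$.
   Context: $(a)_n=a(a+1)\cdots(a+n-1)$ is the Pochhammer symbol, $(a)_0=1$. Power series are understood formally; the log-convexity statement refers to values $x>0$ at which the series converge. *)

(* Defs.v *)
From Stdlib Require Import Reals.
From Coquelicot Require Import Coquelicot.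
Open Scope R_scope.

Fixpoint poch (a : R) (n : nat) : R :=
  match n with
  | O => 1
  | S k => poch a k * (a + INR k)
  end.

Definition hcoef (hs : nat -> R) (a : R) (n : nat) : R := hs n / poch a n.

(* value of the series h(a,x) (meaningful where it converges) *)
Definition hval (hs : nat -> R) (a x : R) : R :=
  Series (fun n => hcoef hs a n * x ^ n).

(* m-th coefficient of the formal power series
   h(a+d,x) h(b,x) - h(b+d,x) h(a,x)  (Cauchy products). *)
Definition lambda_coef (hs : nat -> R) (a b d : R) (m : nat) : R :=
  sum_f_R0 (fun k => hcoef hs (a + d) k * hcoef hs b (m - k)
                     - hcoef hs (b + d) k * hcoef hs a (m - k)) m.

(* Main.v *)
Require Import Defs.
From Stdlib Require Import Reals Lra Lia Psatz.
From Coquelicot Require Import Coquelicot.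
Open Scope R_scope.

Lemma poch_pos c n : 0 < c -> 0 < poch c n.
Proof.
  intro Hc; induction n; simpl. lra.
  apply Rmult_lt_0_compat; auto. pose proof (pos_INR n); lra.
Qed.

Lemma poch_add c k l : poch c (k + l) = poch c k * poch (c + INR k) l.
Proof.
  induction l; simpl.
  - rewrite Nat.add_0_r; ring.
  - rewrite Nat.add_succ_r; simpl. rewrite IHl, plus_INR. ring.
Qed.

Lemma poch_mono a b n : 0 < a -> a <= b -> poch a n <= poch b n.
Proof.
  intros Ha Hb; induction n; simpl. lra.
  pose proof (pos_INR n). pose proof (poch_pos a n Ha).
  apply Rmult_le_compat; lra.
Qed.

Lemma poch_cross a b d n : 0 < a -> a < b -> 0 < d ->
  poch a n * poch (b + d) n <= poch (a + d) n * poch b n /\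
  ((1 <= n)%nat -> poch a n * poch (b + d) n < poch (a + d) n * poch b n).
Proof.
  intros Ha Hab Hd. induction n as [|n IH].
  - simpl. split. lra. intro; lia.
  - destruct IH as [IH _].
    pose proof (pos_INR n) as Hn0.
    pose proof (poch_pos a n Ha). pose proof (poch_pos (b+d) n ltac:(lra)).
    assert (G1 : 0 < (a + INR n) * (b + d + INR n)) by (apply Rmult_lt_0_compat; lra).
    assert (G2 : (a + INR n) * (b + d + INR n) < (a + d + INR n) * (b + INR n)) by nra.
    assert (G3 : 0 < poch a n * poch (b + d) n) by (apply Rmult_lt_0_compat; lra).
    simpl.
    assert (poch a n * (a + INR n) * (poch (b + d) n * (b + d + INR n)) <
            poch (a + d) n * (a + d + INR n) * (poch b n * (b + INR n))).
    { replace (poch a n * (a + INR n) * (poch (b + d) n * (b + d + INR n))) with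
        ((poch a n * poch (b + d) n) * ((a + INR n) * (b + d + INR n))) by ring.
      replace (poch (a + d) n * (a + d + INR n) * (poch b n * (b + INR n))) with
        ((poch (a + d) n * poch b n) * ((a + d + INR n) * (b + INR n))) by ring.
      apply Rle_lt_trans with ((poch (a + d) n * poch b n) * ((a + INR n) * (b + d + INR n))).
      apply Rmult_le_compat_r; lra.
      apply Rmult_lt_compat_l; lra. }
    split; [lra| intros; lra].
Qed.

Lemma key_ineq x y p q : 0 < p -> 0 < q -> p <= x -> q <= x -> p * q <= x * y ->
  p + q <= x + y /\ (p * q < x * y -> p + q < x + y).
Proof.
  intros. assert (0 < x) by lra.
  assert (x * (x + y - p - q) >= (x - p) * (x - q)) by nra.
  assert ((x - p) * (x - q) >= 0) by nra.
  split. nra. intro. assert (x * (x + y - p - q) > (x - p) * (x - q)) by nra. nra.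
Qed.

Definition F hs a b d k j :=
  hs k * hs j * (/ (poch (a + d) k * poch b j) - / (poch (b + d) k * poch a j)).

Lemma pair_neg hs (hpos : forall n, 0 < hs n) a b d (ha : 0 < a) (hab : a < b) (hd : 0 < d)
  k j : (k <= j)%nat -> (1 <= j)%nat -> F hs a b d k j + F hs a b d j k < 0.
Proof.
  intros Hkj Hj. destruct (Nat.le_exists_sub k j Hkj) as [l [-> _]].
  unfold F. rewrite (Nat.add_comm l k), !poch_add.
  set (Pa := poch a k). set (Pb := poch b k). set (Pad := poch (a+d) k). set (Pbd := poch (b+d) k).
  set (Wa := poch (a + INR k) l). set (Wb := poch (b + INR k) l).
  set (Wad := poch (a + d + INR k) l). set (Wbd := poch (b + d + INR k) l).
  pose proof (pos_INR k).
  assert (pPa : 0 < Pa) by (apply poch_pos; lra).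
  assert (pPb : 0 < Pb) by (apply poch_pos; lra).
  assert (pPad : 0 < Pad) by (apply poch_pos; lra).
  assert (pPbd : 0 < Pbd) by (apply poch_pos; lra).
  assert (pWa : 0 < Wa) by (apply poch_pos; lra).
  assert (pWb : 0 < Wb) by (apply poch_pos; lra).
  assert (pWad : 0 < Wad) by (apply poch_pos; lra).
  assert (pWbd : 0 < Wbd) by (apply poch_pos; lra).
  destruct (poch_cross a b d k ha hab hd) as [C1 C1s]. fold Pa Pb Pad Pbd in C1, C1s.
  destruct (poch_cross (a + INR k) (b + INR k) d l ltac:(lra) ltac:(lra) hd) as [C2 C2s].
  replace (b + INR k + d) with (b + d + INR k) in C2, C2s by ring.
  replace (a + INR k + d) with (a + d + INR k) in C2, C2s by ring.
  fold Wa Wb Wad Wbd in C2, C2s.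
  assert (M1 : Wa <= Wad) by (apply poch_mono; lra).
  assert (M2 : Wa <= Wb) by (apply poch_mono; lra).
  destruct (key_ineq (/Wa) (/Wbd) (/Wad) (/Wb)) as [K1 K1s].
  - apply Rinv_0_lt_compat; lra.
  - apply Rinv_0_lt_compat; lra.
  - apply Rinv_le_contravar; lra.
  - apply Rinv_le_contravar; lra.
  - rewrite <- !Rinv_mult. apply Rinv_le_contravar. nra. lra.
  - set (al := / (Pbd * Pa)). set (be := / (Pad * Pb)).
    assert (Hab2 : be <= al).
    { unfold al, be. apply Rinv_le_contravar. nra. lra. }
    assert (Hbe : 0 < be) by (apply Rinv_0_lt_compat; nra).
    assert (Hstr : be < al \/ / Wad + / Wb < / Wa + / Wbd).
    { destruct k as [|k'].
      - right. apply K1s. rewrite <- !Rinv_mult. apply Rinv_lt_contravar. apply Rmult_lt_0_compat; apply Rmult_lt_0_compat; lra.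
        apply C2s. simpl in Hj. lia.
      - left. unfold al, be. apply Rinv_lt_contravar. apply Rmult_lt_0_compat; apply Rmult_lt_0_compat; lra. rewrite (Rmult_comm Pbd). apply C1s. lia. }
    assert (E : hs k * hs (k + l)%nat *
       (/ (Pad * (Pb * Wb)) - / (Pbd * (Pa * Wa))) +
       hs (k + l)%nat * hs k * (/ (Pad * Wad * Pb) - / (Pbd * Wbd * Pa))
       = hs k * hs (k+l)%nat * (be * (/Wb + /Wad) - al * (/Wa + /Wbd))).
    { unfold al, be. field. repeat split; lra. }
    rewrite E. pose proof (hpos k). pose proof (hpos (k+l)%nat).
    assert (0 < /Wb) by (apply Rinv_0_lt_compat; lra).
    assert (0 < /Wad) by (apply Rinv_0_lt_compat; lra).
    assert (be * (/Wb + /Wad) - al * (/Wa + /Wbd) < 0).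
    { destruct Hstr; nra. }
    assert (0 < hs k * hs (k+l)%nat) by nra. nra.
Qed.

Lemma sum_eq_le (f g : nat -> R) n : (forall k, (k <= n)%nat -> f k = g k) ->
  sum_f_R0 f n = sum_f_R0 g n.
Proof.
  induction n; intros H; simpl. apply H; lia.
  rewrite IHn by (intros; apply H; lia). rewrite H by lia. reflexivity.
Qed.

Lemma sum_rev (f : nat -> R) n : sum_f_R0 f n = sum_f_R0 (fun k => f (n - k)%nat) n.
Proof.
  revert f; induction n; intros f. reflexivity.
  rewrite decomp_sum by lia. simpl pred.
  rewrite IHn. simpl sum_f_R0 at 2. rewrite Nat.sub_diag.
  rewrite Rplus_comm. f_equal. apply sum_eq_le. intros k Hk. destruct k; f_equal; lia.
Qed.

Lemma sum_neg (f : nat -> R) n : (forall k, (k <= n)%nat -> f k < 0) -> sum_f_R0 f n < 0.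
Proof.
  induction n; intros H; simpl. apply H; lia.
  assert (sum_f_R0 f n < 0) by (apply IHn; intros; apply H; lia).
  assert (f (S n) < 0) by (apply H; lia). lra.
Qed.

Lemma lambda_neg hs (hpos : forall n, 0 < hs n) a b d (ha : 0 < a) (hab : a < b) (hd : 0 < d)
  m : (1 <= m)%nat -> lambda_coef hs a b d m < 0.
Proof.
  intros Hm. unfold lambda_coef.
  rewrite (sum_eq_le _ (fun k => F hs a b d k (m - k))).
  2:{ intros k Hk. unfold F, hcoef.
      pose proof (hpos k). pose proof (hpos (m-k)%nat).
      assert (0 < poch (a+d) k) by (apply poch_pos; lra).
      assert (0 < poch (b+d) k) by (apply poch_pos; lra).
      assert (0 < poch a (m-k)) by (apply poch_pos; lra).
      assert (0 < poch b (m-k)) by (apply poch_pos; lra).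
      field. repeat split; lra. }
  set (S := sum_f_R0 (fun k => F hs a b d k (m - k)) m).
  assert (2 * S = sum_f_R0 (fun k => F hs a b d k (m - k) + F hs a b d (m - k) k) m).
  { rewrite plus_sum. unfold S.
    assert (Hr : sum_f_R0 (fun i => F hs a b d (m - i) i) m = sum_f_R0 (fun k => F hs a b d k (m - k)) m).
    { rewrite sum_rev. apply sum_eq_le. intros k Hk. f_equal. lia. }
    rewrite Hr. ring. }
  assert (sum_f_R0 (fun k => F hs a b d k (m - k) + F hs a b d (m - k) k) m < 0).
  { apply sum_neg. intros k Hk.
    destruct (Nat.le_gt_cases k (m - k)).
    - apply pair_neg; auto; lia.
    - rewrite Rplus_comm. apply pair_neg; auto; lia. }
  lra.
Qed.

Lemma exp_le' x y : x <= y -> exp x <= exp y.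
Proof. intros [H|H]. left; apply exp_increasing; auto. subst; lra. Qed.

Lemma wam t X Y : 0 < t < 1 ->
  exp (t * X + (1 - t) * Y) <= t * exp X + (1 - t) * exp Y /\
  (X <> Y -> exp (t * X + (1 - t) * Y) < t * exp X + (1 - t) * exp Y).
Proof.
  intros Ht. set (M := t * X + (1 - t) * Y).
  assert (EX : exp X = exp M * exp (X - M)) by (rewrite <- exp_plus; f_equal; ring).
  assert (EY : exp Y = exp M * exp (Y - M)) by (rewrite <- exp_plus; f_equal; ring).
  pose proof (exp_pos M).
  pose proof (exp_ineq1_le (X - M)). pose proof (exp_ineq1_le (Y - M)).
  assert (Hs : t * (1 + (X - M)) + (1 - t) * (1 + (Y - M)) = 1) by (unfold M; ring).
  assert (A1 : t * (1 + (X - M)) <= t * exp (X - M)) by (apply Rmult_le_compat_l; lra).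
  assert (A2 : (1 - t) * (1 + (Y - M)) <= (1 - t) * exp (Y - M)) by (apply Rmult_le_compat_l; lra).
  assert (Fm : t * (exp M * exp (X - M)) + (1 - t) * (exp M * exp (Y - M)) - exp M
      = exp M * (t * exp (X - M) + (1 - t) * exp (Y - M) - 1)) by (intros; ring).
  split.
  - rewrite EX, EY. assert (0 <= exp M * (t * exp (X - M) + (1 - t) * exp (Y - M) - 1)).
    { apply Rmult_le_pos; lra. } lra.
  - intros HXY. assert (HXM : X - M <> 0) by (unfold M; intro; apply HXY; nra).
    pose proof (exp_ineq1 (X - M) HXM).
    assert (A3 : t * (1 + (X - M)) < t * exp (X - M)) by (apply Rmult_lt_compat_l; lra).
    rewrite EX, EY. assert (0 < exp M * (t * exp (X - M) + (1 - t) * exp (Y - M) - 1)).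
    { apply Rmult_lt_0_compat; lra. } lra.
Qed.

Lemma ln_conc t p q : 0 < t < 1 -> 0 < p -> 0 < q ->
  t * ln p + (1 - t) * ln q <= ln (t * p + (1 - t) * q) /\
  (p <> q -> t * ln p + (1 - t) * ln q < ln (t * p + (1 - t) * q)).
Proof.
  intros Ht Hp Hq. destruct (wam t (ln p) (ln q) Ht) as [W1 W2].
  rewrite !exp_ln in W1, W2 by auto.
  split.
  - rewrite <- (ln_exp (t * ln p + (1 - t) * ln q)). apply ln_le. apply exp_pos. auto.
  - intros Hpq. rewrite <- (ln_exp (t * ln p + (1 - t) * ln q)). apply ln_increasing. apply exp_pos.
    apply W2. intro E. apply Hpq. apply ln_inv; auto.
Qed.

Lemma ln_poch t c1 c2 n : 0 < t < 1 -> 0 < c1 -> 0 < c2 ->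
  t * ln (poch c1 n) + (1 - t) * ln (poch c2 n) <= ln (poch (t * c1 + (1 - t) * c2) n).
Proof.
  intros Ht H1 H2. induction n; simpl.
  - rewrite ln_1. lra.
  - pose proof (pos_INR n).
    assert (0 < t * c1 + (1 - t) * c2) by nra.
    rewrite !ln_mult; try (apply poch_pos; lra); try lra.
    replace (t * c1 + (1 - t) * c2 + INR n) with (t * (c1 + INR n) + (1 - t) * (c2 + INR n)) by ring.
    destruct (ln_conc t (c1 + INR n) (c2 + INR n) Ht) as [L _]; try lra.
Qed.

Lemma ln_poch1 t c1 c2 : 0 < t < 1 -> 0 < c1 -> c1 < c2 ->
  t * ln (poch c1 1) + (1 - t) * ln (poch c2 1) < ln (poch (t * c1 + (1 - t) * c2) 1).
Proof.
  intros Ht H1 H2. simpl. rewrite !Rmult_1_l, !Rplus_0_r.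
  apply ln_conc; lra.
Qed.

Definition T hs c x n := hcoef hs c n * x ^ n.

Lemma T_pos hs (hpos : forall n, 0 < hs n) c x n : 0 < c -> 0 < x -> 0 < T hs c x n.
Proof.
  intros. unfold T, hcoef. pose proof (hpos n). pose proof (poch_pos c n H).
  pose proof (pow_lt x n H0).
  apply Rmult_lt_0_compat; auto. apply Rdiv_lt_0_compat; auto.
Qed.

Lemma ln_T hs (hpos : forall n, 0 < hs n) c x n : 0 < c -> 0 < x ->
  ln (T hs c x n) = ln (hs n * x ^ n) - ln (poch c n).
Proof.
  intros. unfold T, hcoef. pose proof (hpos n). pose proof (poch_pos c n H).
  pose proof (pow_lt x n H0).
  rewrite <- ln_div; auto. f_equal. field. lra. apply Rmult_lt_0_compat; auto.
Qed.

Lemma ptwise t P Q A B r : 0 < t < 1 -> 0 < P -> 0 < Q -> 0 < A -> 0 < B -> 0 < r ->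
  ln r <= t * ln P + (1 - t) * ln Q ->
  r <= exp (t * ln A + (1 - t) * ln B) * (t * (P / A) + (1 - t) * (Q / B)) /\
  (ln r < t * ln P + (1 - t) * ln Q ->
   r < exp (t * ln A + (1 - t) * ln B) * (t * (P / A) + (1 - t) * (Q / B))).
Proof.
  intros Ht HP HQ HA HB Hr Hl.
  assert (E : exp (t * ln P + (1 - t) * ln Q) =
     exp (t * ln A + (1 - t) * ln B) * exp (t * ln (P / A) + (1 - t) * ln (Q / B))).
  { rewrite <- exp_plus. f_equal. rewrite !ln_div by auto. ring. }
  destruct (wam t (ln (P / A)) (ln (Q / B)) Ht) as [W _].
  rewrite !exp_ln in W by (apply Rdiv_lt_0_compat; auto).
  pose proof (exp_pos (t * ln A + (1 - t) * ln B)).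
  assert (K : exp (t * ln P + (1 - t) * ln Q) <=
     exp (t * ln A + (1 - t) * ln B) * (t * (P / A) + (1 - t) * (Q / B))).
  { rewrite E. apply Rmult_le_compat_l; lra. }
  split.
  - rewrite <- (exp_ln r Hr). eapply Rle_trans; [apply exp_le'; exact Hl| exact K].
  - intro Hs. rewrite <- (exp_ln r Hr). eapply Rlt_le_trans; [apply exp_increasing; exact Hs| exact K].
Qed.

Lemma series_nonneg (w : nat -> R) : ex_series w -> (forall n, 0 <= w n) -> 0 <= Series w.
Proof.
  intros Hw Hn. replace 0 with (Series (fun n => 0 * w n)).
  apply Series_le; auto. intros; split; [lra| rewrite Rmult_0_l; auto].
  rewrite Series_scal_l. ring.
Qed.

Lemma series_pos (w : nat -> R) : ex_series w -> (forall n, 0 <= w n) -> 0 < w 0%nat -> 0 < Series w.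
Proof.
  intros Hw Hn H0. rewrite Series_incr_1 by auto.
  pose proof (series_nonneg (fun k => w (S k)) (proj1 (ex_series_incr_1 w) Hw) (fun k => Hn (S k))).
  lra.
Qed.

Lemma series_lt (u v : nat -> R) : ex_series u -> ex_series v -> (forall n, u n <= v n) ->
  u 1%nat < v 1%nat -> Series u < Series v.
Proof.
  intros Hu Hv Hle H1.
  assert (Hw : ex_series (fun n => v n - u n)) by (apply (ex_series_minus v u); auto).
  assert (0 < Series (fun n => v n - u n)).
  { rewrite Series_incr_1 by auto.
    pose proof (proj1 (ex_series_incr_1 _) Hw) as Hw1.
    pose proof (series_pos (fun k => v (S k) - u (S k)) Hw1 ltac:(intros; specialize (Hle (S n)); lra) ltac:(simpl; lra)).
    specialize (Hle 0%nat). lra. }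
  rewrite Series_minus in H by auto. lra.
Qed.

Lemma logconv hs (hpos : forall n, 0 < hs n) x (hx : 0 < x)
  (Hex : forall c : R, 0 < c -> ex_series (fun n => hcoef hs c n * x ^ n))
  c1 c2 t (H1 : 0 < c1) (H12 : c1 < c2) (Ht : 0 < t < 1) :
  ln (hval hs (t * c1 + (1 - t) * c2) x)
    < t * ln (hval hs c1 x) + (1 - t) * ln (hval hs c2 x).
Proof.
  set (c := t * c1 + (1 - t) * c2).
  assert (Hc : 0 < c) by (unfold c; nra).
  assert (H2 : 0 < c2) by lra.
  unfold hval. fold (T hs c x) (T hs c1 x) (T hs c2 x).
  assert (E : forall c', 0 < c' -> ex_series (T hs c' x)) by (intros; apply Hex; auto).
  assert (Pos : forall c', 0 < c' -> 0 < Series (T hs c' x)).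
  { intros c' Hc'. apply series_pos; auto. intros; left; apply T_pos; auto. apply T_pos; auto. }
  set (A := Series (T hs c1 x)). set (B := Series (T hs c2 x)).
  assert (HA : 0 < A) by (apply Pos; auto). assert (HB : 0 < B) by (apply Pos; auto).
  set (G := exp (t * ln A + (1 - t) * ln B)).
  set (V := fun n => G * t / A * T hs c1 x n + G * (1 - t) / B * T hs c2 x n).
  assert (Hln : forall n, ln (T hs c x n) <= t * ln (T hs c1 x n) + (1 - t) * ln (T hs c2 x n)).
  { intro n. rewrite !ln_T by auto. pose proof (ln_poch t c1 c2 n Ht H1 H2). fold c in H. lra. }
  assert (HV : forall n, V n = G * (t * (T hs c1 x n / A) + (1 - t) * (T hs c2 x n / B))).
  { intro n. unfold V. field. lra. }
  assert (Hle : forall n, T hs c x n <= V n).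
  { intro n. rewrite HV. apply ptwise; auto; apply T_pos; auto. }
  assert (Hlt : T hs c x 1 < V 1%nat).
  { rewrite HV. apply ptwise; auto; try apply T_pos; auto.
    rewrite !ln_T by auto. pose proof (ln_poch1 t c1 c2 Ht H1 H12). fold c in H. lra. }
  assert (EV : ex_series V).
  { unfold V. apply (ex_series_plus (fun n => G * t / A * T hs c1 x n) (fun n => G * (1 - t) / B * T hs c2 x n));
    apply (ex_series_scal_l _ (T hs _ x)); auto. }
  assert (SV : Series V = G).
  { unfold V. rewrite Series_plus.
    rewrite !Series_scal_l. fold A B. field. lra.
    apply (ex_series_scal_l _ (T hs _ x)); auto.
    apply (ex_series_scal_l _ (T hs _ x)); auto. }
  assert (Hs : Series (T hs c x) < G).
  { rewrite <- SV. apply series_lt; auto. }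
  unfold G in Hs. rewrite <- (ln_exp (t * ln A + (1 - t) * ln B)).
  apply ln_increasing; auto.
Qed.

Theorem theorem3 (hs : nat -> R) (hpos : forall n, 0 < hs n)
  (a b d : R) (ha : 0 < a) (hab : a < b) (hd : 0 < d) :
  lambda_coef hs a b d 0 = 0 /\
  (forall m : nat, (1 <= m)%nat -> lambda_coef hs a b d m < 0) /\
  (* strict log-convexity of c |-> h(c,x) on (0,oo), for x > 0 where the series converge *)
  (forall x : R, 0 < x ->
     (forall c : R, 0 < c -> ex_series (fun n => hcoef hs c n * x ^ n)) ->
     forall (c1 c2 t : R), 0 < c1 -> c1 < c2 -> 0 < t < 1 ->
       ln (hval hs (t * c1 + (1 - t) * c2) x)
         < t * ln (hval hs c1 x) + (1 - t) * ln (hval hs c2 x)).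
Proof.
  split; [|split].
  - unfold lambda_coef, hcoef. simpl. field.
  - intros m Hm. apply lambda_neg; auto.
  - intros x hx Hex c1 c2 t H1 H12 Ht. apply logconv; auto.
Qed.
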